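(* Let ${\bf p},{\bf q}\in[0,1]^K$ with $q_k\le p_k$ for all $k$, let ${\bf u},{\bf v}\in\mathcal{S}_K$, and let $\Pi_{({\bf p},{\bf q})}\subseteq\mathcal{S}_K$ be an atomic lower and upper probability (ALUP) model generated by $({\bf p},{\bf q})$. If the aggregation scheme $({\bf u},{\bf v})$ induces Simpson's paradox in $({\bf p},{\bf q})$, then it incurs sure loss with respect to itself on $\Pi_{({\bf p},{\bf q})}$.
   Context: $\mathcal{S}_K=\{(v_1,\dots,v_K):\sum_k v_k=1,\ v_k\ge 0\}$. An ALUP model generated by $({\bf p},{\bf q})$ is a closed convex set $\Pi_{({\bf p},{\bf q})}$ of vectors $\boldsymbol\pi\in\mathcal{S}_K$ such that $\sup_{\boldsymbol\pi\in\Pi_{({\bf p},{\bf q})}}\pi_k=p_k$ and $\inf_{\boldsymbol\pi\in\Pi_{({\bf p},{\bf q})}}\pi_k=q_k$ for each $k$. The scheme $({\bf u},{\bf v})$ induces Simpson's paradox in $({\bf p},{\bf q})$ if ${\bf p}^\top{\bf u}<{\bf q}^\top{\bf v}$ or ${\bf q}^\top{\bf u}>{\bf p}^\top{\bf v}$. It incurs sure loss with respect to itself on a set $\Pi\subseteq\mathcal{S}_K$ if $\sup_{\boldsymbol\pi\in\Pi}\boldsymbol\pi^\top{\bf u}<\inf_{\boldsymbol\pi\in\Pi}\boldsymbol\pi^\top{\bf v}$ or $\inf_{\boldsymbol\pi\in\Pi}\boldsymbol\pi^\top{\bf u}>\sup_{\boldsymbol\pi\in\Pi}\boldsymbol\pi^\top{\bf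 v}$. *)

(* Defs.v *)
From HB Require Import structures.
From mathcomp Require Import all_boot all_order all_algebra.
From mathcomp Require Import all_classical all_reals all_analysis.
Set Implicit Arguments. Unset Strict Implicit. Unset Printing Implicit Defensive.
Import Order.TTheory GRing.Theory Num.Theory.
Import numFieldNormedType.Exports.
Local Open Scope classical_set_scope.
Local Open Scope ring_scope.

Definition dotv (R : realType) (K : nat) (x y : 'rV[R]_K) : R :=
  \sum_(k < K) x 0 k * y 0 k.

Definition simplex (R : realType) (K : nat) : set 'rV[R]_K :=
  [set v | \sum_(k < K) v 0 k = 1 /\ forall k, 0 <= v 0 k].

Arguments simplex R K : clear implicits.

Definition convex_set (R : realType) (K : nat) (A : set 'rV[R]_K) : Prop :=
  forall x y (t : R), A x -> A y -> 0 <= t <= 1 -> A (t *: x + (1 - t) *: y).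

Definition ALUP (R : realType) (K : nat) (p q : 'rV[R]_K) (Pi : set 'rV[R]_K) : Prop :=
  [/\ Pi `<=` simplex R K, closed Pi, convex_set Pi &
      forall k : 'I_K,
        sup [set pi 0 k | pi in Pi] = p 0 k /\
        inf [set pi 0 k | pi in Pi] = q 0 k].

Definition simpson_paradox (R : realType) (K : nat) (u v p q : 'rV[R]_K) : Prop :=
  dotv p u < dotv q v \/ dotv q u > dotv p v.

Definition sure_loss_self (R : realType) (K : nat) (u v : 'rV[R]_K) (Pi : set 'rV[R]_K) : Prop :=
  sup [set dotv pi u | pi in Pi] < inf [set dotv pi v | pi in Pi] \/
  inf [set dotv pi u | pi in Pi] > sup [set dotv pi v | pi in Pi].

(* Main.v *)
Require Import Defs.
From HB Require Import structures.
From mathcomp Require Import all_boot all_order all_algebra.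
From mathcomp Require Import all_classical all_reals all_analysis.
Import Order.TTheory GRing.Theory Num.Theory.
Local Open Scope classical_set_scope.
Local Open Scope ring_scope.

Lemma simplex_le1 (R : realType) (K : nat) (x : 'rV[R]_K) (k : 'I_K) :
  simplex R K x -> x 0 k <= 1.
Proof.
move=> [hs h0]; rewrite -hs (bigD1 k) //=.
rewrite lerDl; apply: sumr_ge0 => i _; exact: h0.
Qed.

Lemma coord_bounds (R : realType) (K : nat) (p q : 'rV[R]_K) (Pi : set 'rV[R]_K)
  (pi : 'rV[R]_K) (k : 'I_K) :
  ALUP p q Pi -> Pi pi -> q 0 k <= pi 0 k <= p 0 k.
Proof.
move=> [hS _ _ hk] hpi; have [hp hq] := hk k.
have ne : [set x 0 k | x in Pi] !=set0 by exists (pi 0 k); exists pi.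
apply/andP; split.
- rewrite -hq; apply: ge_inf; last by exists pi.
  exists 0 => _ [x hx <-]; have [_ h0] := hS x hx; exact: h0.
- rewrite -hp; apply: ub_le_sup; last by exists pi.
  exists 1 => _ [x hx <-]; exact: simplex_le1 (hS x hx).
Qed.

Theorem lemma4p2 (R : realType) (K : nat) (p q u v : 'rV[R]_K) (Pi : set 'rV[R]_K) :
  (forall k : 'I_K, 0 <= q 0 k /\ q 0 k <= p 0 k /\ p 0 k <= 1) ->
  simplex R K u -> simplex R K v ->
  ALUP p q Pi ->
  simpson_paradox u v p q ->
  sure_loss_self u v Pi.
Proof.
move=> _ [_ hu] [_ hv] hA hsp.
have [Pi0|/set0P [pi0 hpi0]] := eqVneq Pi set0.
  exfalso; case: hA => _ _ _ hk.
  have e0 k : [set pi 0 k | pi in Pi] = set0.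
    by rewrite Pi0; apply/seteqP; split => x // [].
  have hp k : p 0 k = 0 by rewrite -(hk k).1 e0 sup0.
  have hq k : q 0 k = 0 by rewrite -(hk k).2 e0 inf0.
  have dp x : dotv p x = 0.
    by rewrite /dotv big1 // => k _; rewrite hp mul0r.
  have dq x : dotv q x = 0.
    by rewrite /dotv big1 // => k _; rewrite hq mul0r.
  move: hsp; rewrite /simpson_paradox !dp !dq.
  by rewrite ltxx; case.
have b pi k : Pi pi -> q 0 k <= pi 0 k <= p 0 k := fun h => @coord_bounds _ _ _ _ _ pi k hA h.
have neU : [set dotv pi u | pi in Pi] !=set0 by exists (dotv pi0 u); exists pi0.
have neV : [set dotv pi v | pi in Pi] !=set0 by exists (dotv pi0 v); exists pi0.
case: hsp => h; [left|right].
- apply: (le_lt_trans (y := dotv p u)).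
    apply: ge_sup => // _ [pi hpi <-]; apply: ler_sum => k _.
    apply: ler_wpM2r; first exact: hu.
    by case/andP: (b pi k hpi).
  apply: (lt_le_trans h); apply: lb_le_inf => // _ [pi hpi <-].
  apply: ler_sum => k _; apply: ler_wpM2r; first exact: hv.
  by case/andP: (b pi k hpi).
- apply: (le_lt_trans (y := dotv p v)).
    apply: ge_sup => // _ [pi hpi <-]; apply: ler_sum => k _.
    apply: ler_wpM2r; first exact: hv.
    by case/andP: (b pi k hpi).
  apply: (lt_le_trans h); apply: lb_le_inf => // _ [pi hpi <-].
  apply: ler_sum => k _; apply: ler_wpM2r; first exact: hu.
  by case/andP: (b pi k hpi).
Qed.
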